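(* Consider 35 labels arranged in the left-to-right order $g_0,g_1,r_0,r_1,b_0,b_1,g_2,g_3,g_4,m_0,m_1,g_5,g_6,m_2,m_3,m_4,b_2,b_3,b_4,r_2,r_3,r_4,y_0,y_1,r_5,r_6,y_2,y_3,y_4,b_5,b_6,m_5,m_6,y_5,y_6$, and assign to them any 35 real numbers (their $x$-coordinates) that are strictly increasing in this order. For a color $c\in\{g,r,b,m,y\}$ and $0\le i<j\le 6$, let $d^c_{i,j}$ denote the absolute difference of the $x$-coordinates of $c_i$ and $c_j$. Then there is at least one color $c\in\{g,r,b,m,y\}$ such that $$d^c_{0,1}d^c_{2,3}d^c_{3,4}d^c_{5,6}>d^c_{1,2}d^c_{4,5}d^c_{0,3}d^c_{3,6}$$ does not hold. *)

(* Defs.v *)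
From Stdlib Require Import Reals List.
Open Scope R_scope.

Inductive color := cg | cr | cb | cm | cy.

(* The left-to-right order of the 35 labels
   g0 g1 r0 r1 b0 b1 g2 g3 g4 m0 m1 g5 g6 m2 m3 m4 b2 b3 b4 r2 r3 r4
   y0 y1 r5 r6 y2 y3 y4 b5 b6 m5 m6 y5 y6
   is encoded by positions 0..34; [label_pos c i] is the position of c_i. *)
Definition color_positions (c : color) : list nat :=
  match c with
  | cg => 0 :: 1 :: 6 :: 7 :: 8 :: 11 :: 12 :: nil
  | cr => 2 :: 3 :: 19 :: 20 :: 21 :: 24 :: 25 :: nil
  | cb => 4 :: 5 :: 16 :: 17 :: 18 :: 29 :: 30 :: nil
  | cm => 9 :: 10 :: 13 :: 14 :: 15 :: 31 :: 32 :: nil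
  | cy => 22 :: 23 :: 26 :: 27 :: 28 :: 33 :: 34 :: nil
  end%nat.

Definition label_pos (c : color) (i : nat) : nat := nth i (color_positions c) 0%nat.

Definition dist (x : nat -> R) (c : color) (i j : nat) : R :=
  Rabs (x (label_pos c i) - x (label_pos c j)).

Definition ineq (x : nat -> R) (c : color) : Prop :=
  dist x c 0 1 * dist x c 2 3 * dist x c 3 4 * dist x c 5 6 >
  dist x c 1 2 * dist x c 4 5 * dist x c 0 3 * dist x c 3 6.

(* Main.v *)
Require Import Defs.
From Stdlib Require Import Reals List.
From Stdlib Require Import Lra Lia Psatz.
Open Scope R_scope.

Lemma red_lem (a c e h b f S T k1 n1 k2 n2 L1 L2 : R) :
  a*c*e*h > b*f*S*T -> 0 < a -> 0 < c -> 0 < e -> 0 < h -> 0 < b -> 0 < f ->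
  a*c*e*h = (k1*n1)*(k2*n2) -> 0 < k1 -> 0 < k2 ->
  k1 <= S -> k2 <= T -> 0 < L1 -> 0 < L2 -> L1 <= b -> L2 <= f ->
  L1*L2 < n1*n2.
Proof.
  intros H Ha Hc He Hh Hb Hf Heq Hk1 Hk2 HS HT HL1 HL2 Hb' Hf'.
  rewrite Heq in H.
  assert (HLb : L1*L2 <= b*f) by (apply Rmult_le_compat; lra).
  assert (HST : k1*k2 <= S*T) by (apply Rmult_le_compat; lra).
  assert (Hbf : b*f*(k1*k2) <= b*f*(S*T)) by (apply Rmult_le_compat_l; nra).
  assert (Hk : 0 < k1*k2) by nra.
  assert (b*f < n1*n2).
  { apply (Rmult_lt_reg_l (k1*k2)); [exact Hk|].
    replace (k1*k2*(n1*n2)) with (k1*n1*(k2*n2)) by ring. nra. }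
  lra.
Qed.

Lemma mono (x : nat -> R)
  (hx : forall k : nat, (k < 34)%nat -> x k < x (S k)) :
  forall i j, (i < j)%nat -> (j <= 34)%nat -> x i < x j.
Proof.
  intros i j; induction j; intros Hij Hj; [lia|].
  destruct (Nat.eq_dec i j) as [->|Hne].
  - apply hx; lia.
  - apply Rlt_trans with (x j); [apply IHj; lia| apply hx; lia].
Qed.

Theorem lemma4 (x : nat -> R)
  (hx : forall k : nat, (k < 34)%nat -> x k < x (S k)) :
  exists c : color, ~ ineq x c.
Proof.
  assert (Habs : forall i j, (i < j)%nat -> (j <= 34)%nat ->
     Rabs (x i - x j) = x j - x i).
  { intros i j H1 H2. rewrite Rabs_left; [ring|].
    pose proof (mono x hx i j H1 H2); lra. }
  destruct (Classical_Prop.classic (ineq x cg)) as [Hg|Hg]; [|exists cg; exact Hg].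
  destruct (Classical_Prop.classic (ineq x cr)) as [Hr|Hr]; [|exists cr; exact Hr].
  destruct (Classical_Prop.classic (ineq x cb)) as [Hb|Hb]; [|exists cb; exact Hb].
  destruct (Classical_Prop.classic (ineq x cm)) as [Hm|Hm]; [|exists cm; exact Hm].
  destruct (Classical_Prop.classic (ineq x cy)) as [Hy|Hy]; [|exists cy; exact Hy].
  exfalso.
  unfold ineq, Defs.dist, label_pos in *; simpl in *.
  rewrite !Habs in Hg, Hr, Hb, Hm, Hy by lia.
  pose proof (hx 0%nat ltac:(lia)) as X0.
  pose proof (hx 1%nat ltac:(lia)) as X1.
  pose proof (hx 2%nat ltac:(lia)) as X2.
  pose proof (hx 3%nat ltac:(lia)) as X3.
  pose proof (hx 4%nat ltac:(lia)) as X4.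
  pose proof (hx 5%nat ltac:(lia)) as X5.
  pose proof (hx 6%nat ltac:(lia)) as X6.
  pose proof (hx 7%nat ltac:(lia)) as X7.
  pose proof (hx 8%nat ltac:(lia)) as X8.
  pose proof (hx 9%nat ltac:(lia)) as X9.
  pose proof (hx 10%nat ltac:(lia)) as X10.
  pose proof (hx 11%nat ltac:(lia)) as X11.
  pose proof (hx 12%nat ltac:(lia)) as X12.
  pose proof (hx 13%nat ltac:(lia)) as X13.
  pose proof (hx 14%nat ltac:(lia)) as X14.
  pose proof (hx 15%nat ltac:(lia)) as X15.
  pose proof (hx 16%nat ltac:(lia)) as X16.
  pose proof (hx 17%nat ltac:(lia)) as X17.
  pose proof (hx 18%nat ltac:(lia)) as X18.
  pose proof (hx 19%nat ltac:(lia)) as X19.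
  pose proof (hx 20%nat ltac:(lia)) as X20.
  pose proof (hx 21%nat ltac:(lia)) as X21.
  pose proof (hx 22%nat ltac:(lia)) as X22.
  pose proof (hx 23%nat ltac:(lia)) as X23.
  pose proof (hx 24%nat ltac:(lia)) as X24.
  pose proof (hx 25%nat ltac:(lia)) as X25.
  pose proof (hx 26%nat ltac:(lia)) as X26.
  pose proof (hx 27%nat ltac:(lia)) as X27.
  pose proof (hx 28%nat ltac:(lia)) as X28.
  pose proof (hx 29%nat ltac:(lia)) as X29.
  pose proof (hx 30%nat ltac:(lia)) as X30.
  pose proof (hx 31%nat ltac:(lia)) as X31.
  pose proof (hx 32%nat ltac:(lia)) as X32.
  pose proof (hx 33%nat ltac:(lia)) as X33.
  pose proof (red_lem _ _ _ _ _ _ _ _ (x 1%nat - x 0%nat) (x 7%nat - x 6%nat) (x 8%nat - x 7%nat) (x 12%nat - x 11%nat)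
     (x 3%nat - x 2%nat) (x 10%nat - x 9%nat) Hg
     ltac:(lra) ltac:(lra) ltac:(lra) ltac:(lra) ltac:(lra) ltac:(lra) ltac:(ring)
     ltac:(lra) ltac:(lra) ltac:(lra) ltac:(lra) ltac:(lra) ltac:(lra) ltac:(lra) ltac:(lra)) as G.
  pose proof (red_lem _ _ _ _ _ _ _ _ (x 20%nat - x 19%nat) (x 3%nat - x 2%nat) (x 21%nat - x 20%nat) (x 25%nat - x 24%nat)
     (x 15%nat - x 14%nat) (x 23%nat - x 22%nat) Hr
     ltac:(lra) ltac:(lra) ltac:(lra) ltac:(lra) ltac:(lra) ltac:(lra) ltac:(ring)
     ltac:(lra) ltac:(lra) ltac:(lra) ltac:(lra) ltac:(lra) ltac:(lra) ltac:(lra) ltac:(lra)) as Rr.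
  pose proof (red_lem _ _ _ _ _ _ _ _ (x 5%nat - x 4%nat) (x 17%nat - x 16%nat) (x 18%nat - x 17%nat) (x 30%nat - x 29%nat)
     (x 7%nat - x 6%nat) (x 28%nat - x 27%nat) Hb
     ltac:(lra) ltac:(lra) ltac:(lra) ltac:(lra) ltac:(lra) ltac:(lra) ltac:(ring)
     ltac:(lra) ltac:(lra) ltac:(lra) ltac:(lra) ltac:(lra) ltac:(lra) ltac:(lra) ltac:(lra)) as B.
  pose proof (red_lem _ _ _ _ _ _ _ _ (x 14%nat - x 13%nat) (x 10%nat - x 9%nat) (x 32%nat - x 31%nat) (x 15%nat - x 14%nat)
     (x 12%nat - x 11%nat) (x 17%nat - x 16%nat) Hm
     ltac:(lra) ltac:(lra) ltac:(lra) ltac:(lra) ltac:(lra) ltac:(lra) ltac:(ring)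
     ltac:(lra) ltac:(lra) ltac:(lra) ltac:(lra) ltac:(lra) ltac:(lra) ltac:(lra) ltac:(lra)) as M.
  pose proof (red_lem _ _ _ _ _ _ _ _ (x 27%nat - x 26%nat) (x 23%nat - x 22%nat) (x 34%nat - x 33%nat) (x 28%nat - x 27%nat)
     (x 25%nat - x 24%nat) (x 30%nat - x 29%nat) Hy
     ltac:(lra) ltac:(lra) ltac:(lra) ltac:(lra) ltac:(lra) ltac:(lra) ltac:(ring)
     ltac:(lra) ltac:(lra) ltac:(lra) ltac:(lra) ltac:(lra) ltac:(lra) ltac:(lra) ltac:(lra)) as Y.
  clear Hg Hr Hb Hm Hy Habs hx.
  set (ar := x 3%nat - x 2%nat) in *. set (am := x 10%nat - x 9%nat) in *.
  set (cg' := x 7%nat - x 6%nat) in *. set (hg := x 12%nat - x 11%nat) in *.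
  set (em := x 15%nat - x 14%nat) in *. set (ay := x 23%nat - x 22%nat) in *.
  set (hr := x 25%nat - x 24%nat) in *. set (ey := x 28%nat - x 27%nat) in *.
  set (cb := x 17%nat - x 16%nat) in *. set (hb := x 30%nat - x 29%nat) in *.
  assert (Pos : 0 < ar /\ 0 < am /\ 0 < cg' /\ 0 < hg /\ 0 < em /\ 0 < ay /\ 0 < hr /\ 0 < ey /\ 0 < cb /\ 0 < hb)
    by (unfold ar, am, cg', hg, em, ay, hr, ey, cb, hb; lra).
  clearbody ar am cg' hg em ay hr ey cb hb.
  destruct Pos as (p1&p2&p3&p4&p5&p6&p7&p8&p9&p10).
  assert (L : forall p1 q1 p2 q2 : R, p1 < q1 -> p2 < q2 -> 0 < p1 -> 0 < p2 -> p1*p2 < q1*q2).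
  { intros. apply Rmult_le_0_lt_compat; lra. }
  assert (Q1 := L _ _ _ _ G Rr ltac:(repeat apply Rmult_lt_0_compat; assumption) ltac:(repeat apply Rmult_lt_0_compat; assumption)).
  assert (Q2 := L _ _ _ _ Q1 B ltac:(repeat apply Rmult_lt_0_compat; assumption) ltac:(repeat apply Rmult_lt_0_compat; assumption)).
  assert (Q3 := L _ _ _ _ Q2 M ltac:(repeat apply Rmult_lt_0_compat; assumption) ltac:(repeat apply Rmult_lt_0_compat; assumption)).
  assert (Q4 := L _ _ _ _ Q3 Y ltac:(repeat apply Rmult_lt_0_compat; assumption) ltac:(repeat apply Rmult_lt_0_compat; assumption)).
  match type of Q4 with ?l < ?r => assert (l = r) by ring end.
  lra.
Qed.
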